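(* The sequence $\nu=(\nu_k)_{k\in\mathbb N}$ is bounded from above if and only if there exists a $\mathcal{KL}_{\rm gen}$-$\operatorname{Fin}(X^{\rm in})$ upper bound $(\gamma,\theta)$ for $(X^{\rm in},T,\varphi)$. If moreover $G^{>}_\nu\neq\emptyset$, then $(\gamma,\theta)$ can be chosen useful for $\nu$.
   Context: Standing data: a nonempty set $X^{\rm in}\subseteq\mathbb R^d$, a map $T:\mathbb R^d\to\mathbb R^d$ ($T^k$ its $k$-fold composition, $T^0=\mathrm{Id}$), $\varphi:\mathbb R^d\to\mathbb R$ with $\varphi(0)=0$; $\nu_k=\sup_{x\in X^{\rm in}}\varphi(T^k(x))$, assumed finite for every $k$. $G^{>}_\nu=\{k:\nu_k>\limsup_n\nu_n\}$. For $f:\mathbb R^d\to\mathbb R\cup\{+\infty\}$, $\overline f:=\sup_{x\in X^{\rm in}}f(x)$; $\operatorname{Fin}(X^{\rm in})=\{f:\mathbb R^d\to\mathbb R\cup\{+\infty\}:\overline f<+\infty\}$. $\mathcal{KL}_{\rm gen}$ is the set of functions $\gamma:\mathbb R\times\mathbb R_+\to\mathbb R$ such that $s\mapsto\gamma(s,t)$ is (not necessarily strictly) increasing for every $t\ge0$ and $t\mapsto\gamma(s,t)$ is (not necessarily strictly) decreasing for every $s\in\mathbb R$. A pair $(\gamma,\theta)\in\mathcal{KL}_{\rm gen}\times\operatorname{Fin}(X^{\rm in})$ is a $\mathcal{KL}_{\rm gen}$-$\operatorname{Fin}(X^{\rm in})$ upper bound for $(X^{\rm in},T,\varphi)$ if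 $\varphi(T^k(x))\le\gamma(\theta(x),k)$ for all $k\in\mathbb N$, $x\in X^{\rm in}$; it is useful for $\nu$ (when $G^{>}_\nu\ne\emptyset$) if $\{k\in G^{>}_\nu:\inf_{t\ge0}\gamma(\overline\theta,t)<\nu_k\}\neq\emptyset$. *)

(* Defs.v *)
From mathcomp Require Import all_boot all_order all_algebra.
From mathcomp Require Import all_classical all_reals all_analysis.
Set Implicit Arguments. Unset Strict Implicit. Unset Printing Implicit Defensive.
Import Order.TTheory GRing.Theory Num.Theory.
Local Open Scope classical_set_scope.
Local Open Scope ring_scope.

Section Defs.
Variables (R : realType) (d : nat).
Variables (Xin : set 'rV[R]_d) (T : 'rV[R]_d -> 'rV[R]_d) (phi : 'rV[R]_d -> R).

Definition nu (k : nat) : R := sup [set phi (iter k T x) | x in Xin].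

Definition nu_limsup : \bar R := limn_esup (fun n => (nu n)%:E).

Definition Ggt : set nat := [set k | nu_limsup < (nu k)%:E]%E.

Definition fbar (f : 'rV[R]_d -> \bar R) : \bar R := ereal_sup [set f x | x in Xin].

Definition Fin (f : 'rV[R]_d -> \bar R) : Prop :=
  (forall x, f x != -oo%E) /\ (fbar f < +oo)%E.

(* KL_gen, for gamma : R x R_+ -> R (values at t < 0 irrelevant) *)
Definition KLgen (gamma : R -> R -> R) : Prop :=
  (forall t, 0 <= t -> forall s1 s2, s1 <= s2 -> gamma s1 t <= gamma s2 t) /\
  (forall s t1 t2, 0 <= t1 -> t1 <= t2 -> gamma s t2 <= gamma s t1).

(* (gamma, theta) is a KL_gen-Fin(Xin) upper bound for (Xin, T, phi);
   theta x is finite for x in Xin when theta is in Fin(Xin), so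
   gamma (theta x) k is read as gamma (fine (theta x)) k. *)
Definition KLFin_upper_bound (gamma : R -> R -> R) (theta : 'rV[R]_d -> \bar R) : Prop :=
  KLgen gamma /\ Fin theta /\
  forall (k : nat) x, Xin x -> phi (iter k T x) <= gamma (fine (theta x)) k%:R.

Local Notation lt := (@Order.lt _ (\bar R)).
Definition useful (gamma : R -> R -> R) (theta : 'rV[R]_d -> \bar R) : Prop :=
  exists k, Ggt k /\
    lt (ereal_inf [set (gamma (fine (fbar theta)) t)%:E | t in [set t : R | 0 <= t]])
       (nu k)%:E.

End Defs.

(* Main.v *)
Require Import Defs.
From mathcomp Require Import all_boot all_order all_algebra.
From mathcomp Require Import all_classical all_reals all_analysis.
From mathcomp Require Import lra.
Import Order.TTheory GRing.Theory Num.Theory.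
Local Open Scope classical_set_scope.
Local Open Scope ring_scope.

Section Aux.
Variables (R : realType) (d : nat).
Variables (Xin : set 'rV[R]_d) (T : 'rV[R]_d -> 'rV[R]_d) (phi : 'rV[R]_d -> R).
Hypothesis Xne : Xin !=set0.
Hypothesis Hub : forall k : nat, has_ubound [set phi (iter k T x) | x in Xin].

Lemma phi_le_nu k x : Xin x -> phi (iter k T x) <= nu Xin T phi k.
Proof. by move=> Xx; apply: ub_le_sup (Hub k) _ _; exists x. Qed.

Lemma fbar0 : fbar Xin (fun _ => 0%E) = 0%E.
Proof.
rewrite /fbar.
have -> : [set (fun _ : 'rV[R]_d => 0%E) x | x in Xin] = [set 0%E] :> set (\bar R).
  apply/seteqP; split => [y [x _ <-] //|y ->].
  by case: Xne => x Xx; exists x.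
exact: ereal_sup1.
Qed.

Lemma Fin0 : Fin Xin (fun _ => 0%E).
Proof. by split => // ; rewrite fbar0. Qed.

Lemma limsup_lt c : (nu_limsup Xin T phi < c%:E)%E ->
  exists N, forall n, (N <= n)%N -> nu Xin T phi n < c.
Proof.
rewrite /nu_limsup /limn_esup /limf_esup => /ereal_inf_lt [_ [V HV <-]] Hlt.
case: HV => N _ HN; exists N => n Nn.
rewrite -lte_fin; apply: le_lt_trans Hlt.
by apply: ereal_sup_ubound; exists n => //; apply: HN.
Qed.

End Aux.

Theorem mainTheorem10 (R : realType) (d : nat) (Xin : set 'rV[R]_d)
  (T : 'rV[R]_d -> 'rV[R]_d) (phi : 'rV[R]_d -> R) :
  Xin !=set0 ->
  phi 0 = 0 ->
  (forall k : nat, has_ubound [set phi (iter k T x) | x in Xin]) ->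
  ((exists M : R, forall k, nu Xin T phi k <= M) <->
     exists gamma theta, KLFin_upper_bound Xin T phi gamma theta) /\
  (Ggt Xin T phi !=set0 ->
     exists gamma theta, KLFin_upper_bound Xin T phi gamma theta /\
                         useful Xin T phi gamma theta).
Proof.
move=> Xne _ Hub; split; [split|].
- move=> [M HM]; exists (fun _ _ => M), (fun _ => 0%E); split; last split.
  + by split => *.
  + exact: Fin0.
  + by move=> k x Xx; apply: le_trans (HM k); apply: phi_le_nu.
- move=> [gamma [theta [[Hs Ht] [[Hninf Hfin] Hb]]]].
  exists (gamma (fine (fbar Xin theta)) 0) => k.
  apply: ge_sup; first by case: Xne => x Xx; exists (phi (iter k T x)), x.
  move=> _ [x Xx <-].
  have thle : (theta x <= fbar Xin theta)%E by apply: ereal_sup_ubound; exists x.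
  have thfin : theta x \is a fin_num.
    by rewrite fin_numE Hninf /= lt_eqF // (le_lt_trans thle Hfin).
  have fbfin : fbar Xin theta \is a fin_num.
    rewrite fin_numE; apply/andP; split.
      apply/eqP => E; move: thle; rewrite E leeNy_eq => /eqP F.
      by move: thfin; rewrite F.
    by rewrite lt_eqF.
  apply: le_trans (Hb k x Xx) _.
  apply: le_trans (Ht _ 0 k%:R _ _) _ => //.
  apply: Hs => //.
  by rewrite -lee_fin !fineK.
- move=> [k0 Hk0].
  have [c [Lc ck0]] : exists c, (nu_limsup Xin T phi < c%:E)%E /\ c < nu Xin T phi k0.
    move: Hk0; rewrite /Ggt /=.
    case E: (nu_limsup Xin T phi) => [l| |] //= H.
    + exists ((l + nu Xin T phi k0) / 2); rewrite !lte_fin in H *.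
      by split; lra.
    + by exists (nu Xin T phi k0 - 1); split; [exact: ltNyr | lra].
  have [N HN] := @limsup_lt R d Xin T phi c Lc.
  pose M := \sum_(j < N) `|nu Xin T phi j| + `|c|.
  have cM : c <= M.
    apply: le_trans (ler_norm c) _; rewrite /M lerDr.
    by apply: sumr_ge0 => *.
  have nuM j : (j < N)%N -> nu Xin T phi j <= M.
    move=> jN.
    have h1 : `|nu Xin T phi j| <= \sum_(i < N) `|nu Xin T phi i|.
      rewrite (bigD1 (Ordinal jN)) //= lerDl.
      by apply: sumr_ge0 => *.
    apply: le_trans (ler_norm _) (le_trans h1 _).
    by rewrite /M lerDl.
  exists (fun _ t => if t < N%:R then M else c), (fun _ => 0%E).
  split; [split; [|split]|].
  + split => [t _ s1 s2 _|s t1 t2 _ t12] //.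
    case: ifP => h2; case: ifP => h1 //.
    by move: h1; rewrite (le_lt_trans t12 h2).
  + exact: Fin0.
  + move=> k x Xx; apply: le_trans (@phi_le_nu R d Xin T phi Hub k x Xx) _.
    rewrite ltr_nat; case: ltnP => kN; first exact: nuM.
    exact/ltW/HN.
  + exists k0; split => //.
    set S := ereal_inf _.
    have cinf : (S <= c%:E)%E.
      rewrite /S; apply: ereal_inf_lbound; exists N%:R => /=.
        exact: ler0n.
      by rewrite ltxx.
    exact: (le_lt_trans cinf).
Qed.
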